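(* For a parameter vector $(a_1,a_2,b_0,b_1,b_2,s_1,s_2)$ with $h_k=a_1q^k+a_2q^{-k}$ pairwise distinct (over $k\geq -1$), let $(\{\alpha_n\}_{n\geq1},\{\beta_n\}_{n\geq0})$ be the recurrence coefficient sequences defined from it. Let $P=(a_1,a_2,b_0,0,0,s_1,s_2)$. (i) If $a_2\neq 0$, then $P$ and $P_1=(a_1,a_2,b_0,b_1,0,\hat s_1,\hat s_2)$, where $b_1=-\frac{b_0a_2+s_2}{a_2}$, $\hat s_1=\frac{qs_1-b_0a_2-s_2}{q}$, $\hat s_2=-b_0a_2$, yield the same pair of sequences $(\alpha_n,\beta_n)$. (ii) If $a_1\neq 0$, then $P$ and $P_2=(a_1,a_2,b_0,0,b_2,\tilde s_1,\tilde s_2)$, where $b_2=-\frac{b_0a_1+s_1}{a_1}$, $\tilde s_1=-b_0a_1$, $\tilde s_2=s_2-qa_1b_0-qs_1$, yield the same pair of sequences $(\alpha_n,\beta_n)$.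
   Context: Fix $q\in\mathbb{C}$ with $q\neq 0$ and $|q|\neq 1$. Given a parameter vector $(a_1,a_2,b_0,b_1,b_2,s_1,s_2)\in\mathbb{C}^7$, put $s_0=-s_1-s_2$ and define for integers $k$: $x_k=b_0+b_1q^k+b_2q^{-k}$, $h_k=a_1q^k+a_2q^{-k}$, $d_k=s_0+s_1q^k+s_2q^{-k}$, $g_0=0$, $g_k=x_{k-1}(h_k-h_0)+d_k$ for $k\geq1$. The recurrence coefficients are $$\alpha_n=\frac{g_n}{h_{n-1}-h_n}\left(\frac{g_{n-1}}{h_{n-2}-h_n}-\frac{g_n}{h_{n-1}-h_n}+\frac{g_{n+1}}{h_{n-1}-h_{n+1}}+x_n-x_{n-1}\right),\ n\geq1,\qquad \beta_n=x_n+\frac{g_{n+1}}{h_n-h_{n+1}}-\frac{g_n}{h_{n-1}-h_n},\ n\geq0,$$ where any term containing the factor $g_0=0$ is taken to be $0$. (These are the coefficients of the three-term recurrence $u_{n+1}=(t-\beta_n)u_n-\alpha_nu_{n-1}$ satisfied by the monic polynomials $u_n$ determined by the parameters.) *)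

(* Defs.v *)
From mathcomp Require Import all_boot all_order all_algebra.
From mathcomp Require Import complex reals.
Set Implicit Arguments. Unset Strict Implicit. Unset Printing Implicit Defensive.
Import Order.TTheory GRing.Theory Num.Theory.
Local Open Scope ring_scope.

Section Coeffs.
Variables (C : fieldType) (q : C).
Variables (a1 a2 b0 b1 b2 s1 s2 : C).

Definition s0 : C := - s1 - s2.
Definition xk (k : int) : C := b0 + b1 * q ^ k + b2 * q ^ (- k).
Definition hk (k : int) : C := a1 * q ^ k + a2 * q ^ (- k).
Definition dk (k : int) : C := s0 + s1 * q ^ k + s2 * q ^ (- k).
Definition gk (k : nat) : C :=
  if k is 0%N then 0 else xk (k%:Z - 1) * (hk k%:Z - hk 0) + dk k%:Z.

(* alpha_n, n >= 1 ; terms with the factor g_0 = 0 vanish automatically *)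
Definition alpha (n : nat) : C :=
  let N := n%:Z in
  gk n / (hk (N - 1) - hk N) *
  (gk n.-1 / (hk (N - 2) - hk N) - gk n / (hk (N - 1) - hk N)
   + gk n.+1 / (hk (N - 1) - hk (N + 1)) + xk N - xk (N - 1)).

Definition beta (n : nat) : C :=
  let N := n%:Z in
  xk N + gk n.+1 / (hk N - hk (N + 1)) - gk n / (hk (N - 1) - hk N).
End Coeffs.

Definition same_sequences (C : fieldType) (q : C)
  (a1 a2 b0 b1 b2 s1 s2 a1' a2' b0' b1' b2' s1' s2' : C) : Prop :=
  (forall n : nat, (1 <= n)%N ->
     alpha q a1 a2 b0 b1 b2 s1 s2 n = alpha q a1' a2' b0' b1' b2' s1' s2' n) /\
  (forall n : nat,
     beta q a1 a2 b0 b1 b2 s1 s2 n = beta q a1' a2' b0' b1' b2' s1' s2' n).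

(* Main.v *)
Require Import Defs.
From mathcomp Require Import all_boot all_order all_algebra.
From mathcomp Require Import complex reals.
From mathcomp Require Import ring zify.
Import Order.TTheory GRing.Theory Num.Theory.
Local Open Scope ring_scope.
Section S.
Variables (C : fieldType) (q a1 a2 b0 b1 b2 s1 s2 : C).
Hypothesis hq : q != 0.
Lemma gkE k : gk q a1 a2 b0 b1 b2 s1 s2 k = xk q b0 b1 b2 (k%:Z - 1) * (hk q a1 a2 k%:Z - hk q a1 a2 0) + dk q s1 s2 k%:Z.
Proof. case: k => [|k] //=. rewrite /dk /s0 subrr mulr0 expr0z ?oppr0 ?expr0z. ring. Qed.
Lemma xkE k : xk q b0 b1 b2 k = b0 + b1 * q ^ k + b2 / q ^ k.
Proof. by rewrite /xk invr_expz. Qed.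
Lemma hkE k : hk q a1 a2 k = a1 * q ^ k + a2 / q ^ k.
Proof. by rewrite /hk invr_expz. Qed.
Lemma dkE k : dk q s1 s2 k = - s1 - s2 + s1 * q ^ k + s2 / q ^ k.
Proof. by rewrite /dk invr_expz. Qed.
Lemma pm1 j : q ^ (Posz j - 1) = q ^+ j / q.
Proof. by rewrite expfzDr // exprN1. Qed.
Lemma pm2 j : q ^ (Posz j - 2) = q ^+ j / (q * q).
Proof. by rewrite expfzDr // -invr_expz. Qed.
Lemma pp1 j : q ^ (Posz j + 1) = q ^+ j * q.
Proof. by rewrite expfzDr. Qed.
Lemma pz j : q ^ (Posz j) = q ^+ j.
Proof. by []. Qed.
End S.
Lemma neq_lem (C : fieldType) (x y d : C) : y != 0 -> d != 0 -> x = y * d -> x != 0.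
Proof. by move=> hy hd ->; rewrite mulf_neq0. Qed.
Ltac fsimp := rewrite ?(mulf_neq0, expf_neq0, oner_eq0) //=.
Ltac side1 q Q :=
  match goal with H : is_true (negb _) |- _ =>
    first [ apply: (@neq_lem _ _ _ (q * Q) H); [ by repeat apply: mulf_neq0 | by (field; repeat (apply/andP; split); done) ]
          | apply: (@neq_lem _ _ _ (q * q * Q) H); [ by repeat apply: mulf_neq0 | by (field; repeat (apply/andP; split); done) ]
          | apply: (@neq_lem _ _ _ (Q) H); [ by repeat apply: mulf_neq0 | by (field; repeat (apply/andP; split); done) ] ] end.
Ltac side q Q := fsimp; repeat (apply/andP; split); fsimp; try side1 q Q.


Ltac solveA q m := rewrite /alpha /beta /= !gkE !xkE !hkE !dkE !pm1 // ?pm2 // ?pp1 // !pz !expr0 !exprS;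
  (have hQ : q ^+ m != 0 by rewrite expf_neq0);
  let Q := fresh "Q" in set (Q := q ^+ m) in *; move=> H1 H2 H3; field; side q Q.
Ltac solveB q m := rewrite /alpha /beta /= !gkE !xkE !hkE !dkE !pm1 // ?pm2 // ?pp1 // !pz !expr0 !exprS;
  (have hQ : q ^+ m != 0 by rewrite expf_neq0);
  let Q := fresh "Q" in set (Q := q ^+ m) in *; move=> H1 H2; field; side q Q.

Section T.
Variables (C : fieldType) (q a1 a2 b0 s1 s2 : C).
Hypothesis hq : q != 0.
Lemma alpha1 m : a2 != 0 ->
 hk q a1 a2 (m.+1%:Z - 1) - hk q a1 a2 m.+1%:Z != 0 ->
 hk q a1 a2 (m.+1%:Z - 2) - hk q a1 a2 m.+1%:Z != 0 ->
 hk q a1 a2 (m.+1%:Z - 1) - hk q a1 a2 (m.+1%:Z + 1) != 0 ->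
 alpha q a1 a2 b0 0 0 s1 s2 m.+1 =
 alpha q a1 a2 b0 (- ((b0 * a2 + s2) / a2)) 0 ((q * s1 - b0 * a2 - s2) / q) (- (b0 * a2)) m.+1.
Proof. move=> ha. solveA q m. Qed.
Lemma alpha2 m : a1 != 0 ->
 hk q a1 a2 (m.+1%:Z - 1) - hk q a1 a2 m.+1%:Z != 0 ->
 hk q a1 a2 (m.+1%:Z - 2) - hk q a1 a2 m.+1%:Z != 0 ->
 hk q a1 a2 (m.+1%:Z - 1) - hk q a1 a2 (m.+1%:Z + 1) != 0 ->
 alpha q a1 a2 b0 0 0 s1 s2 m.+1 =
 alpha q a1 a2 b0 0 (- ((b0 * a1 + s1) / a1)) (- (b0 * a1)) (s2 - q * a1 * b0 - q * s1) m.+1.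
Proof. move=> ha. solveA q m. Qed.
Lemma beta1 n : a2 != 0 ->
 hk q a1 a2 n%:Z - hk q a1 a2 (n%:Z + 1) != 0 ->
 hk q a1 a2 (n%:Z - 1) - hk q a1 a2 n%:Z != 0 ->
 beta q a1 a2 b0 0 0 s1 s2 n =
 beta q a1 a2 b0 (- ((b0 * a2 + s2) / a2)) 0 ((q * s1 - b0 * a2 - s2) / q) (- (b0 * a2)) n.
Proof. move=> ha. solveB q n. Qed.
Lemma beta2 n : a1 != 0 ->
 hk q a1 a2 n%:Z - hk q a1 a2 (n%:Z + 1) != 0 ->
 hk q a1 a2 (n%:Z - 1) - hk q a1 a2 n%:Z != 0 ->
 beta q a1 a2 b0 0 0 s1 s2 n =
 beta q a1 a2 b0 0 (- ((b0 * a1 + s1) / a1)) (- (b0 * a1)) (s2 - q * a1 * b0 - q * s1) n.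
Proof. move=> ha. solveB q n. Qed.
End T.

Local Open Scope complex_scope.

Theorem mainTheorem9 (R : realType) (q a1 a2 b0 s1 s2 : R[i]) :
  q != 0 -> `|q| != 1 ->
  (forall k l : int, -1 <= k -> -1 <= l -> k != l ->
     hk q a1 a2 k != hk q a1 a2 l) ->
  (a2 != 0 ->
     same_sequences q a1 a2 b0 0 0 s1 s2
       a1 a2 b0 (- ((b0 * a2 + s2) / a2)) 0
       ((q * s1 - b0 * a2 - s2) / q) (- (b0 * a2))) /\
  (a1 != 0 ->
     same_sequences q a1 a2 b0 0 0 s1 s2
       a1 a2 b0 0 (- ((b0 * a1 + s1) / a1))
       (- (b0 * a1)) (s2 - q * a1 * b0 - q * s1)).
Proof.
move=> hq _ Hd.
have hne : forall k l : int, -1 <= k -> -1 <= l -> k != l -> hk q a1 a2 k - hk q a1 a2 l != 0.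
  by move=> k l hk hl hkl; rewrite subr_eq0; apply: Hd.
split=> ha; split.
- case=> [|m] // _; apply: alpha1 => //; apply: hne; lia.
- move=> n; apply: beta1 => //; apply: hne; lia.
- case=> [|m] // _; apply: alpha2 => //; apply: hne; lia.
- move=> n; apply: beta2 => //; apply: hne; lia.
Qed.
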